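(* Let $n$ be a positive integer. Every partition $x\in C_2(n)$ is either a Metropolis 2-partition of $n$ or an extension of some Metropolis 2-partition $y$ of some integer $m<n$.
   Context: A partition of $n$ is identified with a point $x=(x_1,\dots,x_n)\in\mathbb{Z}_{\ge 0}^n$ satisfying $x_1+2x_2+\dots+nx_n=n$, where $x_i$ is the number of parts equal to $i$. Let $P(n)$ be the set of partitions of $n$ and $P_n=\mathrm{conv}\,P(n)\subset\mathbb{R}^n$. $C_2(n)$ is the set of partitions $x\in P(n)$ that are not vertices of $P_n$ and can be written as $x=\lambda y+(1-\lambda)z$ with $y,z\in P(n)$ different from $x$ and $0<\lambda<1$. For an even positive integer $m$, a Metropolis 2-partition of $m$ is a partition of $m$ obtained by joining (taking the multiset union of the parts of) two, not necessarily different, partitions of $m/2$. A partition $x$ of $n$ is an extension of a partition $y$ of $m<n$ if every part of $y$ is a part of $x$. *)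

(* Defs.v *)
From HB Require Import structures.
From mathcomp Require Import all_boot all_order all_algebra.
Unset Printing Implicit Defensive.
Import Order.TTheory GRing.Theory Num.Theory.

(* A partition of n is a multiplicity function x : nat -> nat, where x i is the
   number of parts equal to i; it is supported on {1,..,n} and
   x 1 + 2 x 2 + ... + n x n = n. *)
Definition is_partition (n : nat) (x : nat -> nat) : Prop :=
  (forall i, x i != 0%N -> (1 <= i <= n)%N) /\
  (\sum_(1 <= i < n.+1) i * x i)%N = n.

Local Open Scope ring_scope.

(* the point (x_1,...,x_n) of R^n; coordinate j : 'I_n is x_(j+1) *)
Definition ptn_vec (R : realFieldType) (n : nat) (x : nat -> nat) : 'I_n -> R :=
  fun j => (x j.+1)%:R.

Definition in_Pn (R : realFieldType) (n : nat) (p : 'I_n -> R) : Prop :=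
  exists (k : nat) (c : 'I_k -> R) (y : 'I_k -> nat -> nat),
    (forall t, 0 <= c t) /\ \sum_(t < k) c t = 1 /\
    (forall t, is_partition n (y t)) /\
    (forall j, p j = \sum_(t < k) c t * ptn_vec R n (y t) j).

Definition is_vertex_Pn (R : realFieldType) (n : nat) (p : 'I_n -> R) : Prop :=
  in_Pn R n p /\
  ~ (exists (a b : 'I_n -> R) (l : R),
        in_Pn R n a /\ in_Pn R n b /\ a <> b /\ 0 < l < 1 /\
        (forall j, p j = l * a j + (1 - l) * b j)).

Definition in_C2 (R : realFieldType) (n : nat) (x : nat -> nat) : Prop :=
  is_partition n x /\ ~ is_vertex_Pn R n (ptn_vec R n x) /\
  exists (y z : nat -> nat) (l : R),
    is_partition n y /\ is_partition n z /\ y <> x /\ z <> x /\ 0 < l < 1 /\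
    (forall j, ptn_vec R n x j = l * ptn_vec R n y j + (1 - l) * ptn_vec R n z j).

Definition metropolis2 (m : nat) (x : nat -> nat) : Prop :=
  (0 < m)%N /\ ~~ odd m /\
  exists y z, is_partition m./2 y /\ is_partition m./2 z /\
              (forall i, x i = y i + z i)%N.

Definition extension (n m : nat) (x y : nat -> nat) : Prop :=
  is_partition n x /\ is_partition m y /\ (m < n)%N /\
  (forall i, y i <= x i)%N.

(* Main.v *)
From HB Require Import structures.
From Stdlib Require Import FunctionalExtensionality.
From mathcomp Require Import all_boot all_order all_algebra zify ring lra.
Import Order.TTheory GRing.Theory Num.Theory.
Local Open Scope ring_scope.
Require Import Defs.

Lemma coord_facts {R : realFieldType} {p q : R} {u v : int} :
  0 < p -> 0 < q -> p * u%:~R = - (q * v%:~R) ->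
  [/\ (p = q -> u = -v),
      (p < q -> (0 < v -> u < -v) /\ (v < 0 -> -v < u)),
      (q < p -> (0 < u -> v < -u) /\ (u < 0 -> -u < v)) &
      (u = 0 <-> v = 0)].
Proof.
move=> hp hq e; split.
- move=> epq; subst q; apply/eqP; rewrite -(eqr_int R) intrN.
  apply/eqP; apply: (mulfI (lt0r_neq0 hp)); rewrite e; ring.
- move=> hpq; split=> hv.
  + rewrite -(ltr_int R) intrN. have : 0 < (v%:~R : R) by rewrite ltr0z.
    move=> hv'. nra.
  + rewrite -(ltr_int R) intrN. have : (v%:~R : R) < 0 by rewrite ltrz0.
    move=> hv'. nra.
- move=> hpq; split=> hv.
  + rewrite -(ltr_int R) intrN. have : 0 < (u%:~R : R) by rewrite ltr0z.
    move=> hv'. nra.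
  + rewrite -(ltr_int R) intrN. have : (u%:~R : R) < 0 by rewrite ltrz0.
    move=> hv'. nra.
- split => h; subst; move: e; rewrite ?mulr0 ?oppr0 => /eqP.
  + by rewrite eq_sym oppr_eq0 mulf_eq0 (gt_eqF hq) /= intr_eq0 => /eqP.
  + by rewrite mulf_eq0 (gt_eqF hp) /= intr_eq0 => /eqP.
Qed.

Lemma sum_lt (s : seq nat) (F G : nat -> nat) :
  (forall i, i \in s -> (F i <= G i)%N) -> has (fun i => F i < G i)%N s ->
  (\sum_(i <- s) F i < \sum_(i <- s) G i)%N.
Proof.
elim: s => //= x s IH H; rewrite !big_cons.
have Hs : forall i, i \in s -> (F i <= G i)%N by move=> i hi; apply: H; rewrite inE hi orbT.
have Hx := H x (mem_head _ _).
case/orP => [h|h].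
- have : (\sum_(i <- s) F i <= \sum_(i <- s) G i)%N.
    rewrite big_seq_cond [X in (_ <= X)%N]big_seq_cond; apply: leq_sum => i /andP [hi _]; exact: Hs.
  lia.
- have := IH Hs h; lia.
Qed.

Lemma descent (R : realFieldType) (s : seq nat) (X : nat -> int) :
 forall N (a b : nat -> int) (p q : R),
 (\sum_(i <- s) (absz (a i) + absz (b i)) <= N)%N ->
 0 < p -> 0 < q ->
 (forall i, i \in s -> p * (a i)%:~R = - (q * (b i)%:~R)) ->
 has (fun i => a i != 0) s ->
 (forall i, i \in s -> 0 <= X i + a i) ->
 (forall i, i \in s -> 0 <= X i + b i) ->
 \sum_(i <- s) (i%:Z * a i) = 0 -> \sum_(i <- s) (i%:Z * b i) = 0 ->
 exists w : nat -> int, has (fun i => w i != 0) s /\ \sum_(i <- s) (i%:Z * w i) = 0 /\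
   (forall i, i \in s -> 0 <= X i + w i /\ 0 <= X i - w i).
Proof.
elim=> [|N IH] a b p q Hm Hp Hq Hr Ha HXa HXb Sa Sb.
  have/hasP [i hi hai] := Ha.
  move: Hm; rewrite leqn0 sum_nat_seq_eq0 => /allP /(_ i hi) /=.
  move: hai; lia.
have [epq|npq] := eqVneq p q.
  exists a; split=> //; split=> // i hi; split; first exact: HXa.
  have [h _ _ _] := coord_facts Hp Hq (Hr i hi); have := HXb i hi; rewrite (h epq); lia.
have/hasP [i0 hi0 hai0] := Ha.
case: (ltgtP p q) npq => // hpq _.
- have Hm' : (\sum_(i <- s) (absz (a i + b i)%R + absz (b i)) <= N)%N.
    suff : (\sum_(i <- s) (absz (a i + b i)%R + absz (b i)) < \sum_(i <- s) (absz (a i) + absz (b i)))%N by lia.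
    apply: sum_lt.
      move=> i hi; have [_ H12 _ h4] := coord_facts Hp Hq (Hr i hi); move: (proj1 (H12 hpq)) (proj2 (H12 hpq)) h4; lia.
    apply/hasP; exists i0 => //.
    have [_ H12 _ h4] := coord_facts Hp Hq (Hr i0 hi0); move: (proj1 (H12 hpq)) (proj2 (H12 hpq)) h4 hai0; lia.
  apply: (IH (fun i => a i + b i) b p (q - p)) => //.
  + by rewrite subr_gt0.
  + move=> i hi; rewrite intrD mulrDr Hr //; ring.
  + apply/hasP; exists i0 => //.
    have [_ H12 _ h4] := coord_facts Hp Hq (Hr i0 hi0); move: (proj1 (H12 hpq)) (proj2 (H12 hpq)) h4 hai0; lia.
  + move=> i hi; have [_ H12 _ h4] := coord_facts Hp Hq (Hr i hi).
    move: (proj1 (H12 hpq)) (proj2 (H12 hpq)) h4 (HXa i hi) (HXb i hi); lia.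
  + under eq_bigr do rewrite mulrDr. by rewrite big_split /= Sa Sb addr0.
- have Hm' : (\sum_(i <- s) (absz (a i + b i)%R + absz (a i)) <= N)%N.
    suff : (\sum_(i <- s) (absz (a i + b i)%R + absz (a i)) < \sum_(i <- s) (absz (a i) + absz (b i)))%N by lia.
    apply: sum_lt.
      move=> i hi; have [_ _ H12 h4] := coord_facts Hp Hq (Hr i hi); move: (proj1 (H12 hpq)) (proj2 (H12 hpq)) h4; lia.
    apply/hasP; exists i0 => //.
    have [_ _ H12 h4] := coord_facts Hp Hq (Hr i0 hi0); move: (proj1 (H12 hpq)) (proj2 (H12 hpq)) h4 hai0; lia.
  apply: (IH (fun i => a i + b i) a q (p - q)) => //.
  + by rewrite subr_gt0.
  + move=> i hi; have := Hr i hi; rewrite intrD mulrDr => e; lra.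
  + apply/hasP; exists i0 => //.
    have [_ _ H12 h4] := coord_facts Hp Hq (Hr i0 hi0); move: (proj1 (H12 hpq)) (proj2 (H12 hpq)) h4 hai0; lia.
  + move=> i hi; have [_ _ H12 h4] := coord_facts Hp Hq (Hr i hi).
    move: (proj1 (H12 hpq)) (proj2 (H12 hpq)) h4 (HXa i hi) (HXb i hi); lia.
  + under eq_bigr do rewrite mulrDr. by rewrite big_split /= Sa Sb addr0.
Qed.
Lemma intr_natE (R : realFieldType) (n : nat) : (n%:Z)%:~R = n%:R :> R.
Proof. by []. Qed.

Lemma sumz (s : seq nat) (F : nat -> nat) :
  \sum_(i <- s) (F i)%:Z = (\sum_(i <- s) F i)%N :> int.
Proof. rewrite -natz natr_sum; apply: eq_bigr => i _; by rewrite natz. Qed.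

Lemma sum_ext_range (F : nat -> nat) M K :
  (forall i, F i != 0%N -> (1 <= i <= M)%N) -> (M <= K)%N ->
  (\sum_(1 <= i < K.+1) i * F i = \sum_(1 <= i < M.+1) i * F i)%N.
Proof.
move=> H hMK; rewrite (@big_cat_nat _ _ _ M.+1) ?ltnS //=.
rewrite [X in (_ + X)%N]big1_seq ?addn0 // => i /andP [_].
rewrite mem_index_iota => /andP [h1 h2].
case: (eqVneq (F i) 0%N) => [->|/H]; [by rewrite muln0 | lia].
Qed.

Lemma part_of_sum (F : nat -> nat) N m :
  (forall i, F i != 0%N -> (1 <= i <= N)%N) ->
  (\sum_(1 <= i < N.+1) i * F i)%N = m -> is_partition m F.
Proof.
move=> H Hs.
have H2 : forall i, F i != 0%N -> (1 <= i <= m)%N.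
  move=> i hi; have /andP [h1 h2] := H i hi.
  have hin : i \in index_iota 1 N.+1 by rewrite mem_index_iota; lia.
  move: Hs; rewrite (big_rem i hin) /=; move: hi h1.
  have := leq_pmulr i (n:=F i). move=> hh. nia.
split=> //.
rewrite -(@sum_ext_range F m (maxn N m)) //; last by lia.
by rewrite (@sum_ext_range F N (maxn N m)) //; lia.
Qed.

Lemma supp0 {n F} : is_partition n F -> forall i, i \notin index_iota 1 n.+1 -> F i = 0%N.
Proof.
move=> [H _] i; rewrite mem_index_iota => hi; apply/eqP; apply/negPn/negP => /H; lia.
Qed.

Theorem theorem5 (R : realFieldType) (n : nat) (x : nat -> nat) :
  (0 < n)%N -> in_C2 R n x ->
  metropolis2 n x \/
  (exists (m : nat) (y : nat -> nat), metropolis2 m y /\ extension n m x y).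
Proof.
move=> n0 [Hx [_ [y [z [l [Hy [Hz [yx [zx [/andP [l0 l1] Hv]]]]]]]]]].
set s := index_iota 1 n.+1.
have Hv' : forall i, i \in s -> (x i)%:R = l * (y i)%:R + (1 - l) * (z i)%:R :> R.
  move=> i; rewrite mem_index_iota => hi.
  have hj : (i.-1 < n)%N by lia.
  have := Hv (Ordinal hj); rewrite /ptn_vec /= prednK //; lia.
have Sp : forall F, is_partition n F -> \sum_(i <- s) i%:Z * ((F i)%:Z - (x i)%:Z) = 0.
  move=> F [_ HF]; rewrite (eq_bigr (fun i => (i * F i)%N%:Z - (i * x i)%N%:Z)); last first.
    by move=> i _; rewrite mulrBr.
  by rewrite sumrB !sumz HF (proj2 Hx) subrr.
have Ha : has (fun i => (y i)%:Z - (x i)%:Z != 0) s.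
  apply/negPn/negP => /hasPn H; apply: yx; apply: functional_extensionality => i.
  case: (boolP (i \in s)) => hi.
    by move: (H i hi); rewrite negbK subr_eq0 => /eqP [].
  by rewrite (supp0 Hy i hi) (supp0 Hx i hi).
have q0 : 0 < 1 - l by rewrite subr_gt0.
have Hr : forall i, i \in s -> l * ((y i)%:Z - (x i)%:Z)%:~R = - ((1 - l) * ((z i)%:Z - (x i)%:Z)%:~R).
  move=> i hi; rewrite !intrB !intr_natE (Hv' i hi); ring.
have HXa : forall i, i \in s -> 0 <= (x i)%:Z + ((y i)%:Z - (x i)%:Z) by move=> i _; rewrite addrC subrK.
have HXb : forall i, i \in s -> 0 <= (x i)%:Z + ((z i)%:Z - (x i)%:Z) by move=> i _; rewrite addrC subrK.
have [w [Hw0 [Hws Hwb]]] := @descent R s (fun i => (x i)%:Z) _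
   (fun i => (y i)%:Z - (x i)%:Z) (fun i => (z i)%:Z - (x i)%:Z) l (1 - l)
   (leqnn _) l0 q0 Hr Ha HXa HXb (Sp _ Hy) (Sp _ Hz).
set wp := fun i => if (i \in s) && (0 <= w i) then absz (w i) else 0%N.
set wm := fun i => if (i \in s) && (w i < 0) then absz (w i) else 0%N.
have Hle : forall i, (wp i + wm i <= x i)%N.
  move=> i; rewrite /wp /wm; case: (boolP (i \in s)) => hi //=.
  have := Hwb i hi; case: (boolP (0 <= w i)) => h; rewrite ltNge h /=; lia.
have Hid : forall i, i \in s -> i%:Z * w i = (i * wp i)%N%:Z - (i * wm i)%N%:Z.
  move=> i hi; rewrite /wp /wm hi /=; case: (boolP (0 <= w i)) => h; rewrite ltNge h /=.
    by rewrite muln0 subr0 PoszM gez0_abs.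
  by rewrite muln0 sub0r PoszM ltz0_abs ?mulrN ?opprK // ltNge.
set k := (\sum_(i <- s) i * wp i)%N.
have km : (\sum_(i <- s) i * wm i)%N = k.
  have : \sum_(i <- s) ((i * wp i)%N%:Z - (i * wm i)%N%:Z) = 0.
    rewrite -[RHS]Hws [LHS]big_seq [RHS]big_seq; apply: eq_bigr => i hi; by rewrite (Hid i hi).
  by rewrite sumrB !sumz => /eqP; rewrite subr_eq0 => /eqP [] <-.
have Hterm : forall (F : nat -> nat) i, i \in s -> (F i <= \sum_(j <- s) F j)%N.
  by move=> F i hi; rewrite (big_rem i hi) /= leq_addr.
have k0 : (0 < k)%N.
  have/hasP [i0 hi0 hw] := Hw0.
  have := hi0; rewrite mem_index_iota => /andP [h1 _].
  case: (boolP (0 <= w i0)) => h.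
    have := Hterm (fun i => i * wp i)%N i0 hi0; rewrite /= /wp hi0 h /=.
    move: hw h h1; rewrite -/k; nia.
  have := Hterm (fun i => i * wm i)%N i0 hi0; rewrite /= /wm hi0 ltNge h /= km.
  move: hw h h1; nia.
have supp : forall F : nat -> nat, (forall i, i \notin s -> F i = 0%N) ->
    forall i, F i != 0%N -> (1 <= i <= n)%N.
  move=> F HF i; case: (boolP (i \in s)) => hi; first by rewrite mem_index_iota ltnS in hi.
  by rewrite HF.
have Pp : is_partition k wp.
  apply: (@part_of_sum _ n) => //; apply: supp => i hi; by rewrite /wp (negbTE hi).
have Pm : is_partition k wm.
  apply: (@part_of_sum _ n) => //; apply: supp => i hi; by rewrite /wm (negbTE hi).
have Pu : is_partition (k + k) (fun i => wp i + wm i).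
  apply: (@part_of_sum _ n).
    apply: supp => i hi; by rewrite /wp /wm (negbTE hi).
  under eq_bigr do rewrite mulnDr. by rewrite big_split /= km.
have Mu : metropolis2 (k + k) (fun i => wp i + wm i).
  split; first by lia.
  split; first by rewrite addnn odd_double.
  by exists wp, wm; rewrite addnn half_double.
have Hdiff : (\sum_(i <- s) i * x i = (k + k) + \sum_(i <- s) (i * x i - i * (wp i + wm i)))%N.
  have e2 : (k + k = \sum_(i <- s) i * (wp i + wm i))%N.
    under [RHS]eq_bigr do rewrite mulnDr. by rewrite big_split /= km.
  rewrite e2.
  rewrite -big_split /=; apply: eq_bigr => i _; rewrite subnKC // leq_mul2l Hle orbT //.
have nx : (\sum_(i <- s) i * x i)%N = n by case: Hx.
case: (ltnP (k + k) n) => hkn.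
  right; exists (k + k), (fun i => wp i + wm i); split => //; split => //.
have e0 : (\sum_(i <- s) (i * x i - i * (wp i + wm i)) == 0)%N by apply/eqP; lia.
move: e0; rewrite sum_nat_seq_eq0 => /allP He.
have ekn : n = (k + k)%N by lia.
left; split => //; split; first by rewrite ekn addnn odd_double.
exists wp, wm.
rewrite ekn addnn half_double; split => //; split => //.
move=> i; case: (boolP (i \in s)) => hi.
  have := He i hi; have := Hle i; have := hi; rewrite mem_index_iota /= => /andP [h1 _].
  rewrite -mulnBr muln_eq0 => h2 /orP [/eqP h3|]; first lia.
  rewrite subn_eq0 => h4; apply/eqP; by rewrite eqn_leq h2 h4.
by rewrite (supp0 Hx i hi) /wp /wm (negbTE hi).
Qed.
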